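(* Let $R=K[X_1,\dots,X_d]$ be a polynomial ring over a field $K$, $f$ a nonzero polynomial in $R$, and $\mathcal{J}_f=\bigcap_{n\ge1}\sqrt{J_{f^n}}$. Then $I:_R(f)^\infty=I:_R\mathcal{J}_f^\infty$ for all monomial ideals $I$ of $R$.
   Context: For a nonzero polynomial $g=\sum_{\mathbf{n}}a_{\mathbf{n}}X_1^{n_1}\cdots X_d^{n_d}$, $J_g$ is the monomial ideal generated by the monomials occurring in $g$ with nonzero coefficient. $I:_RJ^\infty=\bigcup_k(I:_RJ^k)$. *)

(* Defs.v *)
From HB Require Import structures.
From mathcomp Require Import all_boot all_order all_algebra.
From mathcomp Require Import mpoly.

Set Implicit Arguments.
Unset Strict Implicit.
Unset Printing Implicit Defensive.

Import GRing.Theory.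
Local Open Scope ring_scope.

Section Ideals.
Variable R : comRingType.

Definition is_ideal (I : R -> Prop) : Prop :=
  [/\ I 0, (forall x y, I x -> I y -> I (x + y)) &
      (forall r x, I x -> I (r * x))].

Definition gen_ideal (S : R -> Prop) : R -> Prop :=
  fun x => forall J, is_ideal J -> (forall s, S s -> J s) -> J x.

Definition principal (f : R) : R -> Prop := gen_ideal (fun x => x = f).

Definition radical (I : R -> Prop) : R -> Prop := fun x => exists n : nat, I (x ^+ n).

Definition ideal_mul (I J : R -> Prop) : R -> Prop :=
  gen_ideal (fun x => exists a b, [/\ I a, J b & x = a * b]).

Fixpoint ideal_pow (J : R -> Prop) (k : nat) : R -> Prop :=
  match k with
  | 0 => fun _ => True
  | k'.+1 => ideal_mul (ideal_pow J k') J
  end.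

Definition colon (I J : R -> Prop) : R -> Prop :=
  fun x => forall y, J y -> I (x * y).

Definition saturation (I J : R -> Prop) : R -> Prop :=
  fun x => exists k : nat, colon I (ideal_pow J k) x.

End Ideals.

Section Monomial.
Variables (K : fieldType) (d : nat).

Definition monomial_ideal (I : {mpoly K[d]} -> Prop) : Prop :=
  exists S : 'X_{1..d} -> Prop,
    forall x, I x <-> gen_ideal (fun p => exists2 m, S m & p = 'X_[m]) x.

Definition Jmon (g : {mpoly K[d]}) : {mpoly K[d]} -> Prop :=
  gen_ideal (fun p => exists2 m, m \in msupp g & p = 'X_[m]).

Definition calJ (f : {mpoly K[d]}) : {mpoly K[d]} -> Prop :=
  fun x => forall n : nat, (1 <= n)%N -> radical (Jmon (f ^+ n)) x.

End Monomial.

(* Main.v *)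
Require Import Defs.
From HB Require Import structures.
From mathcomp Require Import all_boot all_order all_algebra.
From mathcomp Require Import mpoly.
From mathcomp Require Import zify.
From Stdlib Require Import Classical ClassicalEpsilon.
Set Implicit Arguments.
Unset Strict Implicit.
Unset Printing Implicit Defensive.
Import GRing.Theory.
Local Open Scope ring_scope.
Section Basics.
Variable R : comRingType.
Implicit Types (I J A B : R -> Prop) (S : R -> Prop).

Lemma gen_idealP S : is_ideal (gen_ideal S).
Proof.
split.
- by move=> J [J0 _ _] _.
- by move=> x y Hx Hy J HJ HS; case: (HJ) => _ HD _; apply: HD; [apply: Hx|apply: Hy].
- by move=> r x Hx J HJ HS; case: (HJ) => _ _ HM; apply: HM; apply: Hx.
Qed.

Lemma gen_ideal_in S s : S s -> gen_ideal S s.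
Proof. by move=> Hs J _ HS; apply: HS. Qed.

Lemma ideal_mulr I x r : is_ideal I -> I x -> I (x * r).
Proof. by case=> _ _ HM Hx; rewrite mulrC; apply: HM. Qed.

Lemma ideal_sum I (T : eqType) (s : seq T) (F : T -> R) :
  is_ideal I -> (forall i, i \in s -> I (F i)) -> I (\sum_(i <- s) F i).
Proof.
case=> H0 HD HM; elim: s => [|a s IH] Hs; first by rewrite big_nil.
rewrite big_cons; apply: HD; first by apply: Hs; rewrite inE eqxx.
by apply: IH => i Hi; apply: Hs; rewrite inE Hi orbT.
Qed.

Lemma ideal_mul_mono I A B x : (forall y, A y -> B y) ->
  ideal_mul I A x -> ideal_mul I B x.
Proof.
move=> AB Hx; apply: Hx; first exact: gen_idealP.
move=> s [a [b [Ha Hb ->]]]; apply: gen_ideal_in; exists a, b; split=> //.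
exact: AB.
Qed.

Lemma ideal_pow_mono A B k x : (forall y, A y -> B y) ->
  ideal_pow A k x -> ideal_pow B k x.
Proof.
move=> AB; elim: k x => [//|k IH] x /= Hx.
apply: (ideal_mul_mono AB).
apply: Hx; first exact: gen_idealP.
move=> s [a [b [Ha Hb ->]]]; apply: gen_ideal_in; exists a, b; split=> //.
exact: IH.
Qed.

Lemma colon_powS I J N x : is_ideal I ->
  (forall b, J b -> colon I (ideal_pow J N) (x * b)) ->
  colon I (ideal_pow J N.+1) x.
Proof.
move=> HI H y /= Hy.
have Hid : is_ideal (fun y => I (x * y)).
  case: HI => H0 HD HM; split.
  - by rewrite mulr0.
  - by move=> u v Hu Hv; rewrite mulrDr; apply: HD.
  - by move=> r u Hu; rewrite mulrCA; apply: HM.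
apply: (Hy _ Hid) => s [a [b [Ha Hb ->]]].
by rewrite (mulrC a) mulrA; apply: H.
Qed.

Lemma colon_pow0 I x : is_ideal I -> I x -> colon I (ideal_pow (fun _ => False) 0) x.
Proof. by move=> HI Hx y _; apply: ideal_mulr. Qed.

End Basics.
Section Mono.
Variables (K : fieldType) (d : nat).
Notation M := 'X_{1..d}.
Notation P := {mpoly K[d]}.
Implicit Types (Pr : pred M) (p q x : P) (m : M).

Definition restr (Pr : pred M) (p : P) : P :=
  \sum_(m <- msupp p | Pr m) p@_m *: 'X_[m].

Lemma mcoeff_restr Pr p m : (restr Pr p)@_m = if Pr m then p@_m else 0.
Proof.
rewrite /restr raddf_sum /=.
under eq_bigr do rewrite mcoeffZ mcoeffX.
rewrite big_mkcond /=.
case: (boolP (m \in msupp p)) => Hm.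
- rewrite (bigD1_seq m) //= ?msupp_uniq // eqxx.
  rewrite big1 ?addr0; first by case: (Pr m); rewrite ?mulr1.
  by move=> i /negbTE Hi; rewrite Hi mulr0; case: (Pr i).
- rewrite big1_seq; first by move: Hm; rewrite mcoeff_msupp negbK => /eqP ->; case: (Pr m).
  move=> i /= Hi; have -> : (i == m) = false.
    by apply/negbTE; apply: contraNneq Hm => <-.
  by rewrite mulr0; case: (Pr i).
Qed.

Lemma msupp_restr Pr p m : (m \in msupp (restr Pr p)) = Pr m && (m \in msupp p).
Proof. by rewrite !mcoeff_msupp mcoeff_restr; case: (Pr m); rewrite ?eqxx. Qed.

Lemma restrD Pr p q : restr Pr (p + q) = restr Pr p + restr Pr q.
Proof. by apply/mpolyP=> m; rewrite mcoeffD !mcoeff_restr mcoeffD; case: (Pr m); rewrite ?addr0. Qed.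

Lemma restr_split Pr p : p = restr Pr p + restr (predC Pr) p.
Proof. by apply/mpolyP=> m; rewrite mcoeffD !mcoeff_restr /=; case: (Pr m); rewrite ?addr0 ?add0r. Qed.

Lemma restr_id Pr p : (forall m, m \in msupp p -> Pr m) -> restr Pr p = p.
Proof.
move=> H; apply/mpolyP=> m; rewrite mcoeff_restr.
case: (boolP (Pr m)) => // HP; apply/esym/eqP; rewrite mcoeff_eq0.
by apply: contra HP; apply: H.
Qed.

Lemma restr_0 Pr p : (forall m, m \in msupp p -> ~~ Pr m) -> restr Pr p = 0.
Proof.
move=> H; apply/mpolyP=> m; rewrite mcoeff_restr mcoeff0.
case: (boolP (Pr m)) => // HP; apply/eqP; rewrite mcoeff_eq0.
by apply: contraL HP; apply: H.
Qed.

Definition inEx (S : M -> Prop) (m : M) := exists2 s, S s & (s <= m)%MM.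

Lemma inE_up S m m' : inEx S m -> (m <= m')%MM -> inEx S m'.
Proof. by case=> s Hs Hsm Hmm; exists s => //; exact: (lepm_trans Hsm Hmm). Qed.

Lemma genmonP S x :
  gen_ideal (fun p => exists2 m, S m & p = 'X_[m]) x <->
  (forall m, m \in msupp x -> inEx S m).
Proof.
split.
- move=> Hx; apply: (Hx (fun x : P => forall m, m \in msupp x -> inEx S m)).
  + split.
    * by move=> m; rewrite msupp0.
    * move=> u v Hu Hv m /msuppD_le; rewrite mem_cat => /orP [] ?; [exact: Hu|exact: Hv].
    * move=> r u Hu m /msuppM_le /allpairsP [[m1 m2] /= [_ H2 ->]].
      by apply: (inE_up (Hu _ H2)); rewrite addmC; apply: lem_addr.
  + move=> s [m Hm ->] m'; rewrite msuppX mem_seq1 => /eqP ->.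
    by exists m => //; apply: lepm_refl.
- move=> H; rewrite (mpolyE x); apply: ideal_sum; first exact: gen_idealP.
  move=> m /H [s Hs Hsm].
  rewrite -(submK Hsm) mpolyXD scalerAl.
  case: (gen_idealP (fun p : P => exists2 m, S m & p = 'X_[m])) => _ _ HM.
  by apply: HM; apply: gen_ideal_in; exists s.
Qed.

End Mono.

Section W.
Variables (K : fieldType) (d : nat).
Notation M := 'X_{1..d}.
Notation P := {mpoly K[d]}.
Implicit Types (Pr : pred M) (p q x : P) (m : M) (S : {set 'I_d}).

Definition w S m : nat := (\sum_(i in S) m i)%N.

Lemma wD S m1 m2 : w S (m1 + m2)%MM = (w S m1 + w S m2)%N.
Proof. by rewrite /w -big_split /=; apply: eq_bigr => i _; rewrite mnmDE. Qed.

Lemma msuppM_ex p q m : m \in msupp (p * q) ->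
  exists m1 m2, [/\ m1 \in msupp p, m2 \in msupp q & m = (m1 + m2)%MM].
Proof. by move/msuppM_le/allpairsP => [[m1 m2] /= [H1 H2 ->]]; exists m1, m2. Qed.

Lemma restrM_low S (dp dq : nat) p q :
  (forall m, m \in msupp p -> (dp <= w S m)%N) ->
  (forall m, m \in msupp q -> (dq <= w S m)%N) ->
  restr (fun m => w S m == dp + dq)%N (p * q) =
  restr (fun m => w S m == dp)%N p * restr (fun m => w S m == dq)%N q.
Proof.
move=> Hp Hq.
set Pp := (fun m => w S m == dp)%N; set Pq := (fun m => w S m == dq)%N.
have Ep := restr_split Pp p; have Eq := restr_split Pq q.
set ps := restr Pp p; set pr := restr (predC Pp) p.
set qs := restr Pq q; set qr := restr (predC Pq) q.
transitivity (restr (fun m => w S m == dp + dq)%N (ps * qs + ps * qr + pr * q)).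
  by rewrite -mulrDr -Eq -mulrDl -Ep.
rewrite !restrD (restr_id (p := ps * qs)); last first.
  move=> m /msuppM_ex [m1 [m2 [H1 H2 ->]]].
  move: H1 H2; rewrite !msupp_restr /Pp /Pq => /andP [/eqP h1 _] /andP [/eqP h2 _].
  by rewrite wD h1 h2.
rewrite (restr_0 (p := ps * qr)); last first.
  move=> m /msuppM_ex [m1 [m2 [H1 H2 ->]]].
  move: H1 H2; rewrite !msupp_restr /Pp /Pq /= => /andP [/eqP h1 _] /andP [h2 h3].
  have := Hq _ h3; rewrite wD h1; move: h2; lia.
rewrite (restr_0 (p := pr * q)) ?addr0 //.
  move=> m /msuppM_ex [m1 [m2 [H1 H2 ->]]].
  move: H1; rewrite !msupp_restr /Pp /= => /andP [h1 h3].
  have := Hp _ h3; have := Hq _ H2; rewrite wD; move: h1; lia.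
Qed.

Lemma w_pos_coord S m i : i \in S -> (m i <= w S m)%N.
Proof. by move=> Hi; rewrite /w (bigD1 i) //= leq_addr. Qed.

End W.

Definition dec (Q : Prop) : bool := if excluded_middle_informative Q then true else false.
Lemma decP Q : reflect Q (dec Q).
Proof. by rewrite /dec; case: excluded_middle_informative => H; constructor. Qed.

Section Prime.
Variables (K : fieldType) (d : nat).
Notation M := 'X_{1..d}.
Notation P := {mpoly K[d]}.
Implicit Types (Pr : pred M) (p q x y f : P) (m : M) (S : {set 'I_d}).

Lemma w0 S : w S (0%MM : M) = 0%N.
Proof. by rewrite /w big1 // => i _; rewrite mnm0E. Qed.

Lemma restr0_exp S y e :
  restr (fun m => w S m == 0)%N (y ^+ e) = (restr (fun m => w S m == 0)%N y) ^+ e.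
Proof.
elim: e => [|e IH].
  rewrite !expr0 restr_id // => m; rewrite msupp1 mem_seq1 => /eqP ->.
  by rewrite w0.
rewrite !exprS -IH.
exact: (@restrM_low K d S 0 0 y (y ^+ e)).
Qed.

Lemma prime_w S y e : (forall m, m \in msupp (y ^+ e) -> (0 < w S m)%N) ->
  forall m, m \in msupp y -> (0 < w S m)%N.
Proof.
move=> H m Hm; case: e H => [|e] H.
  by have := H 0%MM; rewrite expr0 msupp1 mem_seq1 eqxx w0 => /(_ isT).
have H0 : restr (fun m => w S m == 0)%N (y ^+ e.+1) = 0.
  by apply: restr_0 => m' /H; rewrite lt0n.
rewrite restr0_exp in H0.
move/eqP: H0; rewrite expf_eq0 /= => /eqP H0.
rewrite lt0n; apply/negP => Hw.
have : m \in msupp (restr (fun m => w S m == 0)%N y) by rewrite msupp_restr Hw Hm.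
by rewrite H0 msupp0.
Qed.

Lemma slice S (E : M -> Prop) f p :
  (forall m m', E m -> (m <= m')%MM -> E m') ->
  (forall a b, E (a + b)%MM -> w S b = 0%N -> E a) ->
  (exists2 b0, b0 \in msupp f & w S b0 = 0%N) ->
  (forall m, m \in msupp (p * f) -> E m) ->
  forall m, m \in msupp p -> E m.
Proof.
move=> Hup Hfree [b0 Hb0 wb0] Hpf.
set Pe := fun m => dec (E m).
set p' := restr (predC Pe) p; set pe := restr Pe p.
have Hp' : forall m, m \in msupp (p' * f) -> E m.
  have -> : p' * f = p * f - pe * f.
    by rewrite (restr_split Pe p) -/p' -/pe mulrDl addrAC subrr add0r.
  move=> m /msuppB_le; rewrite mem_cat => /orP [/Hpf //|].
  move=> /msuppM_ex [m1 [m2 [H1 H2 ->]]].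
  move: H1; rewrite msupp_restr => /andP [/decP H1 _].
  by apply: Hup H1 _; apply: lem_addr.
move=> m0 Hm0; apply: NNPP => Hn.
have Hm0' : m0 \in msupp p' by rewrite msupp_restr /= Hm0 andbT; apply/decP.
pose Pk k := has (fun m => w S m == k)%N (msupp p').
have exk : exists k, Pk k by exists (w S m0); apply/hasP; exists m0.
case: (ex_minnP exk) => dl Hdl Hmin.
have Hlow : forall m, m \in msupp p' -> (dl <= w S m)%N.
  by move=> m Hm; apply: Hmin; apply/hasP; exists m.
have L := @restrM_low K d S dl 0 p' f Hlow (fun _ _ => leq0n _).
set A := restr _ p' in L; set B := restr _ f in L.
have nA : A != 0.
  case/hasP: Hdl => m Hm Hwm; apply/negP => /eqP HA.
  have : m \in msupp A by rewrite msupp_restr Hwm Hm.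
  by rewrite HA msupp0.
have nB : B != 0.
  apply/negP => /eqP HB.
  have : b0 \in msupp B by rewrite msupp_restr wb0 eqxx Hb0.
  by rewrite HB msupp0.
have nAB : A * B != 0 by rewrite mulf_neq0.
move: nAB; rewrite -msupp_eq0; case E1: (msupp (A * B)) => [//|c s] _.
have Hc : c \in msupp (A * B) by rewrite E1 inE eqxx.
have Ec : E c.
  by apply: Hp'; move: Hc; rewrite -L msupp_restr => /andP [].
case/msuppM_ex: Hc => [a [b [Ha Hb Hcab]]].
move: Ha Hb; rewrite !msupp_restr => /andP [_ Ha] /andP [/eqP wb _].
move: Ha => /andP [/decP Ha _].
by apply: Ha; apply: (Hfree a b) => //; rewrite -Hcab.
Qed.

End Prime.

Section C1.
Variables (K : fieldType) (d : nat).
Notation M := 'X_{1..d}.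
Notation P := {mpoly K[d]}.
Implicit Types (Pr : pred M) (p q x y f : P) (m : M) (S : {set 'I_d}).

Definition mS (N : nat) S : M := [multinom (if i \in S then 0 else N)%N | i < d].

Lemma mSE N S i : mS N S i = (if i \in S then 0 else N)%N.
Proof. by rewrite /mS mnmE. Qed.

Lemma inE_mS_mono (Sg : M -> Prop) S a N N' :
  inEx Sg (a + mS N S)%MM -> (N <= N')%N -> inEx Sg (a + mS N' S)%MM.
Proof.
move=> H HN; apply: (inE_up H); apply/mnm_lepP => i.
rewrite !mnmDE !mSE; case: (i \in S) => //; lia.
Qed.

Lemma mdeg_coord m i : (m i <= mdeg m)%N.
Proof. by rewrite mdegE (bigD1 i) //= leq_addr. Qed.

Lemma C1 (Sg : M -> Prop) S f x k :
  (exists2 b0, b0 \in msupp f & w S b0 = 0%N) ->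
  (forall m, m \in msupp (x * f ^+ k) -> inEx Sg m) ->
  exists N, forall a, a \in msupp x -> inEx Sg (a + mS N S)%MM.
Proof.
move=> Hb Hx.
pose E' m := exists N, inEx Sg (m + mS N S)%MM.
have Hup : forall m m', E' m -> (m <= m')%MM -> E' m'.
  move=> m m' [N HN] Hle; exists N; apply: (inE_up HN).
  apply/mnm_lepP => i; rewrite !mnmDE; move/mnm_lepP: Hle => /(_ i); lia.
have Hfree : forall a b, E' (a + b)%MM -> w S b = 0%N -> E' a.
  move=> a b [N HN] wb; exists (N + mdeg b)%N; apply: (inE_up HN).
  apply/mnm_lepP => i; rewrite !mnmDE !mSE.
  case: (boolP (i \in S)) => Hi.
    by have := w_pos_coord b Hi; rewrite wb; lia.
  by have := mdeg_coord b i; lia.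
have Hk : forall k p, (forall m, m \in msupp (p * f ^+ k) -> E' m) ->
    forall m, m \in msupp p -> E' m.
  elim=> [|k' IH] p H.
    by move=> m Hm; apply: H; rewrite expr0 mulr1.
  apply: IH; apply: (slice Hup Hfree Hb).
  by move=> m Hm; apply: H; rewrite exprSr mulrA.
have HE : forall m, m \in msupp x -> E' m.
  apply: (Hk k) => m /Hx Hm; exists 0%N; apply: (inE_up Hm); apply: lem_addr.
elim: (msupp x) HE => [|a s IH] HE; first by exists 0%N.
case: IH => [m Hm|N HN]; first by apply: HE; rewrite inE Hm orbT.
case: (HE a); first by rewrite inE eqxx.
move=> Na HNa; exists (maxn N Na) => a'; rewrite inE => /orP [/eqP ->|Ha'].
  by apply: (inE_mS_mono HNa); apply: leq_maxr.
by apply: (inE_mS_mono (HN _ Ha')); apply: leq_maxl.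
Qed.

End C1.

Section Main.
Variables (K : fieldType) (d : nat) (f : {mpoly K[d]}).
Notation M := 'X_{1..d}.
Notation P := {mpoly K[d]}.
Implicit Types (p q x y : P) (m : M) (S : {set 'I_d}).

Definition good S := exists2 b0, b0 \in msupp f & w S b0 = 0%N.
Definition bad S := forall b, b \in msupp f -> (0 < w S b)%N.
Definition Wj (j : nat) (u : M) := forall S, bad S -> (j <= w S u)%N.

Lemma w_mono S m m' : (m <= m')%MM -> (w S m <= w S m')%N.
Proof. by move/mnm_lepP => H; apply: leq_sum => i _; apply: H. Qed.

Lemma calJ_mon y : calJ f y -> forall v, v \in msupp y -> forall S, bad S -> (0 < w S v)%N.
Proof.
move=> Hy v Hv S HS.
case: (Hy 1%N isT) => e; rewrite expr1 /Jmon => /genmonP He.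
apply: (prime_w (e := e)) Hv => m /He [s Hs Hsm].
by apply: leq_trans (HS _ Hs) (w_mono S Hsm).
Qed.

Lemma final (Sg : M -> Prop) x M0 :
  (forall S, good S -> forall a, a \in msupp x -> inEx Sg (a + mS M0 S)%MM) ->
  forall a u, a \in msupp x -> Wj (d * M0).+1 u -> inEx Sg (a + u)%MM.
Proof.
move=> H a u Ha Hu.
pose S := [set i | (u i < M0)%N].
case: (classic (good S)) => Hg.
  apply: (inE_up (H S Hg a Ha)); apply/mnm_lepP => i; rewrite !mnmDE mSE.
  rewrite /S inE; case: ltnP => //; lia.
have Hb : bad S.
  move=> b Hb; rewrite lt0n; apply/negP => /eqP wb; apply: Hg; by exists b.
have := Hu S Hb.
have : (w S u <= #|S| * M0)%N.
  rewrite /w -sum_nat_const; apply: leq_sum => i; rewrite /S inE; lia.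
have : (#|S| <= d)%N by rewrite -[X in (_ <= X)%N](card_ord d) max_card.
move=> h1 h2 h3.
have : (#|S| * M0 <= d * M0)%N by apply: leq_mul.
lia.
Qed.

Lemma uniform (Sg : M -> Prop) x :
  (forall S, good S -> exists N, forall a, a \in msupp x -> inEx Sg (a + mS N S)%MM) ->
  exists M0, forall S, good S -> forall a, a \in msupp x -> inEx Sg (a + mS M0 S)%MM.
Proof.
move=> H.
suff : forall l : seq {set 'I_d}, exists M0, forall S, S \in l -> good S ->
    forall a, a \in msupp x -> inEx Sg (a + mS M0 S)%MM.
  case/(_ (enum {set 'I_d})) => M0 HM0; exists M0 => S; apply: HM0.
  by rewrite mem_enum.
elim=> [|S l [M0 HM0]]; first by exists 0%N.
case: (classic (good S)) => Hg.
  case: (H S Hg) => N HN; exists (maxn M0 N) => S'; rewrite inE => /orP [/eqP ->|HS'] Hg' a Ha.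
    by apply: (inE_mS_mono (HN a Ha)); apply: leq_maxr.
  by apply: (inE_mS_mono (HM0 S' HS' Hg' a Ha)); apply: leq_maxl.
exists M0 => S'; rewrite inE => /orP [/eqP ->|HS'] Hg'; first by [].
exact: HM0.
Qed.

End Main.

Lemma principal_calJ (K : fieldType) (d : nat) (f y : {mpoly K[d]}) :
  principal f y -> calJ f y.
Proof.
move=> Hy.
have [r ->] : exists r, y = r * f.
  apply: (Hy (fun y => exists r, y = r * f)).
  - split.
    + by exists 0; rewrite mul0r.
    + by move=> u v [r1 ->] [r2 ->]; exists (r1 + r2); rewrite mulrDl.
    + by move=> r u [r1 ->]; exists (r * r1); rewrite mulrA.
  - by move=> s ->; exists 1; rewrite mul1r.
move=> n _; exists n; rewrite exprMn.
have Hfn : Jmon (f ^+ n) (f ^+ n).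
  by apply/genmonP => m Hm; exists m => //; apply: lepm_refl.
by case: (gen_idealP (fun p : {mpoly K[d]} => exists2 m, m \in msupp (f ^+ n) & p = 'X_[m])) => _ _ HM; apply: HM.
Qed.

Lemma pow_f (R : comRingType) (f : R) k : ideal_pow (principal f) k (f ^+ k).
Proof.
elim: k => [//|k IH] /=.
apply: gen_ideal_in; exists (f ^+ k), f; split => //; last by rewrite exprSr.
exact: gen_ideal_in.
Qed.

Theorem lemma6p3 (K : fieldType) (d : nat) (f : {mpoly K[d]}) :
  f != 0 ->
  forall I : {mpoly K[d]} -> Prop,
    monomial_ideal I ->
    forall x : {mpoly K[d]},
      saturation I (principal f) x <-> saturation I (calJ f) x.
Proof.
move=> _ I [Sg HI] x.
have HIm : forall z, I z <-> (forall m, m \in msupp z -> inEx Sg m).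
  by move=> z; rewrite HI; apply: genmonP.
have HIid : is_ideal I.
  case: (gen_idealP (fun p : {mpoly K[d]} => exists2 m, Sg m & p = 'X_[m])) => H0 HD HM.
  split.
  - by apply/HI.
  - by move=> u v /HI Hu /HI Hv; apply/HI; apply: HD.
  - by move=> r u /HI Hu; apply/HI; apply: HM.
split; last first.
  case=> k Hk; exists k => y Hy; apply: Hk.
  exact: (ideal_pow_mono (@principal_calJ K d f)).
case=> k Hk.
have Hxf : forall m, m \in msupp (x * f ^+ k) -> inEx Sg m.
  by apply/HIm; apply: Hk; apply: pow_f.
have Hgood : forall S, good f S -> exists N, forall a, a \in msupp x -> inEx Sg (a + mS N S)%MM.
  by move=> S HS; apply: (C1 HS Hxf).
case: (uniform Hgood) => M0 HM0.
have Hfin := final HM0.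
pose Good (z : {mpoly K[d]}) j := forall m, m \in msupp z ->
  exists a u, [/\ a \in msupp x, Wj f j u & m = (a + u)%MM].
have main : forall i j z, Good z j -> ((d * M0).+1 <= i + j)%N ->
    colon I (ideal_pow (calJ f) i) z.
  elim=> [|i IH] j z Hz Hij.
    move=> y _; apply: ideal_mulr => //; apply/HIm => m /Hz [a [u [Ha Hu ->]]].
    apply: Hfin => // S HS; have := Hu S HS; lia.
  apply: colon_powS => // b Hb; apply: (IH j.+1); last by lia.
  move=> m /msuppM_ex [m1 [m2 [H1 H2 ->]]].
  case: (Hz _ H1) => a [u [Ha Hu ->]].
  exists a, (u + m2)%MM; split => //; last by rewrite addmA.
  move=> S HS; rewrite wD; have := Hu S HS; have := calJ_mon Hb H2 HS; lia.
exists (d * M0).+1; apply: (main _ 0%N); last by lia.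
move=> m Hm; exists m, 0%MM; split => //; last by rewrite addm0.
Qed.
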